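(* For every positive integer $n$, the set $I^n_{\mathfrak U}=\{\operatorname{is}(X): X\in\mathfrak U,\ |X|=n\}$ is an open dense subset of the space of isometry types of ultrametric spaces $(X,d)$ with $|X|\leqslant n$, endowed with the Gromov–Hausdorff metric.
   Context: $\operatorname{Sp}(X)=\{d(x,y):x\neq y\}$; $\mathfrak U$ is the class of finite ultrametric spaces $X$ with $|\operatorname{Sp}(X)|=|X|-1$. $\operatorname{is}(X)$ denotes the isometry type of $X$. For bounded metric spaces $X,Y$ and $\varepsilon>0$, $d_{GH}(\operatorname{is}(X),\operatorname{is}(Y))<\varepsilon$ iff there is a metric space $(Z,d_Z)$ with subspaces $X',Y'$ isometric to $X,Y$ such that each point of $X'$ lies at $d_Z$-distance $<\varepsilon$ from some point of $Y'$ and each point of $Y'$ lies at distance $<\varepsilon$ from some point of $X'$; $d_{GH}$ is a metric on isometry types of compact (in particular finite) metric spaces. *)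

(* Defs.v *)
From HB Require Import structures.
From mathcomp Require Import all_boot all_order all_algebra.
From mathcomp Require Import reals.
Set Implicit Arguments. Unset Strict Implicit. Unset Printing Implicit Defensive.
Import Order.TTheory GRing.Theory Num.Theory.
Local Open Scope ring_scope.

Section Defs.
Variable R : realType.

Definition is_metric (Z : Type) (d : Z -> Z -> R) : Prop :=
  (forall x y, 0 <= d x y) /\
  (forall x y, d x y = 0 <-> x = y) /\
  (forall x y, d x y = d y x) /\
  (forall x y z, d x z <= d x y + d y z).

Definition is_ultrametric (T : finType) (d : T -> T -> R) : Prop :=
  is_metric d /\ (forall x y z, d x z <= Num.max (d x y) (d y z)).

Definition spectrum (T : finType) (d : T -> T -> R) : seq R :=
  undup [seq d p.1 p.2 | p <- enum [pred p : T * T | p.1 != p.2]].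

Definition in_frakU (T : finType) (d : T -> T -> R) : Prop :=
  is_ultrametric d /\ size (spectrum d) = (#|T| - 1)%N.

Definition isometric (T1 T2 : finType) (d1 : T1 -> T1 -> R)
  (d2 : T2 -> T2 -> R) : Prop :=
  exists f : T1 -> T2, bijective f /\ forall x y, d2 (f x) (f y) = d1 x y.

(* d_GH(is(X), is(Y)) < eps, as characterized in the paper. *)
Definition GH_lt (T1 T2 : finType) (d1 : T1 -> T1 -> R)
  (d2 : T2 -> T2 -> R) (eps : R) : Prop :=
  exists (Z : Type) (dZ : Z -> Z -> R) (f : T1 -> Z) (g : T2 -> Z),
    [/\ is_metric dZ,
        (forall x x', dZ (f x) (f x') = d1 x x'),
        (forall y y', dZ (g y) (g y') = d2 y y'),
        (forall x, exists y, dZ (f x) (g y) < eps) &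
        (forall y, exists x, dZ (f x) (g y) < eps)].

Definition in_InU (n : nat) (T : finType) (d : T -> T -> R) : Prop :=
  exists (T' : finType) (d' : T' -> T' -> R),
    [/\ in_frakU d', #|T'| = n & isometric d' d].

End Defs.

(* Main.v *)
Require Import Defs.
From HB Require Import structures.
From mathcomp Require Import all_boot all_order all_algebra.
From mathcomp Require Import reals.
From Stdlib Require Import ClassicalEpsilon.
From mathcomp Require Import zify ring lra.
Import Order.TTheory GRing.Theory Num.Theory.
Local Open Scope ring_scope.
Set Implicit Arguments. Unset Strict Implicit. Unset Printing Implicit Defensive.

Section Aux.
Variable R : realType.

Lemma seq_min (T : eqType) (s : seq T) (f : T -> R) : s != [::] ->
  exists2 y, y \in s & forall z, z \in s -> f y <= f z.
Proof.
elim: s => [//|x s IH] _.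
case: s IH => [|a s] IH.
  by exists x; rewrite ?inE // => z; rewrite inE => /eqP ->.
have [y ys hy] := IH isT.
case: (leP (f x) (f y)) => hxy.
  exists x; first by rewrite inE eqxx.
  move=> z; rewrite inE => /orP[/eqP ->//|zs]; exact: le_trans hxy (hy _ zs).
exists y; first by rewrite inE ys orbT.
move=> z; rewrite inE => /orP[/eqP ->|zs]; [exact: ltW|exact: hy].
Qed.

Definition maxl (I : Type) (P : I -> bool) (F : I -> R) (r : seq I) : R :=
  foldr (fun k acc => if P k then Num.max (F k) acc else acc) 0 r.

Lemma maxl_ge0 (I : Type) (P : I -> bool) (F : I -> R) (r : seq I) : 0 <= @maxl I P F r.
Proof. elim: r => [|k r IH] //=; case: (P k) => //; by rewrite le_max IH orbT. Qed.

Lemma maxl_ub (I : eqType) (P : I -> bool) (F : I -> R) (r : seq I) x : 0 <= x ->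
  (forall k, k \in r -> P k -> F k <= x) -> @maxl I P F r <= x.
Proof.
move=> x0; elim: r => [|k r IH] //= H.
have H' : forall k0, k0 \in r -> P k0 -> F k0 <= x by move=> k0 kr; apply: H; rewrite inE kr orbT.
case Pk: (P k); last exact: IH.
by rewrite ge_max IH // H // inE eqxx.
Qed.

Lemma maxl_ge (I : eqType) (P : I -> bool) (F : I -> R) (r : seq I) k : k \in r -> P k -> F k <= @maxl I P F r.
Proof.
elim: r => [//|a r IH] /=; rewrite inE => /orP[/eqP ->|kr] Pk.
  by rewrite Pk le_max lexx.
case: (P a); last exact: IH.
by rewrite le_max IH ?orbT.
Qed.

Lemma maxl_cases (I : eqType) (P : I -> bool) (F : I -> R) (r : seq I) : @maxl I P F r = 0 \/
  exists k, [/\ k \in r, P k & @maxl I P F r = F k].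
Proof.
elim: r => [|a r IH] /=; first by left.
case Pa: (P a); last first.
  case: IH => [->|[k [kr Pk ->]]]; first by left.
  by right; exists k; rewrite inE kr orbT.
case: (leP (F a) (maxl P F r)) => h.
  case: IH => [->|[k [kr Pk ->]]]; first by left.
  by right; exists k; rewrite inE kr orbT.
by right; exists a; rewrite inE eqxx.
Qed.

Definition minl (I : Type) (P : I -> bool) (F : I -> R) (r : seq I) : R :=
  foldr (fun k acc => if P k then Num.min (F k) acc else acc) 1 r.

Lemma minl_gt0 (I : eqType) (P : I -> bool) (F : I -> R) (r : seq I) : (forall k, k \in r -> P k -> 0 < F k) ->
  0 < @minl I P F r.
Proof.
elim: r => [|k r IH] //= H.
have H' : forall k0, k0 \in r -> P k0 -> 0 < F k0 by move=> k0 kr; apply: H; rewrite inE kr orbT.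
case Pk: (P k); last exact: IH.
by rewrite lt_min IH // H // inE eqxx.
Qed.

Lemma minl_le (I : eqType) (P : I -> bool) (F : I -> R) (r : seq I) k : k \in r -> P k -> @minl I P F r <= F k.
Proof.
elim: r => [//|a r IH] /=; rewrite inE => /orP[/eqP ->|kr] Pk.
  by rewrite Pk ge_min lexx.
case: (P a); last exact: IH.
by rewrite ge_min IH ?orbT.
Qed.

Lemma spectrumP (T : finType) (d : T -> T -> R) v :
  reflect (exists x y, x != y /\ v = d x y) (v \in spectrum d).
Proof.
rewrite /spectrum mem_undup; apply: (iffP mapP).
  by case=> [[x y]]; rewrite mem_enum /= => xy ->; exists x, y.
by case=> x [y [xy ->]]; exists (x, y); rewrite ?mem_enum.
Qed.

Lemma spectrum_uniq (T : finType) (d : T -> T -> R) : uniq (spectrum d).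
Proof. exact: undup_uniq. Qed.

Section SpecBound.
Variables (T : finType) (d : T -> T -> R).
Hypothesis ud : is_ultrametric d.

Definition specA (A : {set T}) : seq R :=
  undup [seq d p.1 p.2 | p <- enum [pred p : T * T | [&& p.1 \in A, p.2 \in A & p.1 != p.2]]].

Lemma specAP (A : {set T}) v : reflect (exists x y, [/\ x \in A, y \in A, x != y & v = d x y]) (v \in specA A).
Proof.
rewrite /specA mem_undup; apply: (iffP mapP).
  case=> [[x y]]; rewrite mem_enum /= => /and3P[xA yA xy] ->; by exists x, y.
by case=> x [y [xA yA xy ->]]; exists (x, y); rewrite ?mem_enum //= inE /= xA yA.
Qed.

Lemma specA_bound k (A : {set T}) : (#|A| <= k)%N -> (size (specA A) <= #|A| - 1)%N.
Proof.
case: ud => [[d0 [dE [dsym dtr]]] dult].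
elim: k A => [|k IH] A hA; (case: (leqP #|A| 1) => hA1; last first).
- by move: (leq_trans hA1 hA).
- suff -> : specA A = [::] by [].
  apply/eqP; rewrite -size_eq0 -leqn0.
  have: (size (specA A) <= size ([::] : seq R))%N.
    apply: uniq_leq_size; first exact: undup_uniq.
    move=> v /specAP [x [y [xA yA xy _]]].
    have : (2 <= #|A|)%N.
      rewrite (cardD1 x) xA (cardD1 y) !inE yA eq_sym xy //.
    by rewrite leqNgt ltnS hA1.
  by [].
2: { suff -> : specA A = [::] by [].
  apply/eqP; rewrite -size_eq0 -leqn0.
  have: (size (specA A) <= size ([::] : seq R))%N.
    apply: uniq_leq_size; first exact: undup_uniq.
    move=> v /specAP [x [y [xA yA xy _]]].
    have : (2 <= #|A|)%N.
      rewrite (cardD1 x) xA (cardD1 y) !inE yA eq_sym xy //.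
    by rewrite leqNgt ltnS hA1.
  by []. }
have [x xA] : exists x, x \in A.
  by apply/set0Pn; rewrite -card_gt0; apply: leq_trans hA1.
set A' := A :\ x.
have cA : #|A| = #|A'|.+1 by rewrite (cardsD1 x A) xA.
have A'n : enum A' != [::].
  apply/eqP=> e; move: hA1; rewrite cA ltnS lt0n cardE e eqxx //.
have [y yA' ymin] := seq_min (d x) A'n.
rewrite mem_enum in yA'.
have {}ymin : forall z, z \in A' -> d x y <= d x z by move=> z zA; apply: ymin; rewrite mem_enum.
have sub : {subset specA A <= d x y :: specA A'}.
  move=> v /specAP [a [b [aA bA ab ->]]].
  rewrite inE.
  have key : forall z, z \in A' -> d x z = d x y \/ (y != z /\ d x z = d y z).
    move=> z zA'.
    case: (eqVneq (d x z) (d x y)) => e; first by left.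
    have lt : d x y < d x z by rewrite lt_neqAle eq_sym e ymin.
    right; split.
      by apply/eqP=> yz; rewrite yz eqxx in e.
    apply/eqP; rewrite eq_le; apply/andP; split.
      have := dult x y z; rewrite le_max => /orP[h|//].
      by move: (lt_le_trans lt h); rewrite ltxx.
    have := dult y x z; rewrite le_max => /orP[h|//].
    rewrite (dsym y x) in h; exact: le_trans h (ltW lt).
  case: (eqVneq a x) => [ax|ax]; case: (eqVneq b x) => [bx|bx].
  - by rewrite ax bx eqxx in ab.
  - subst a; have bA' : b \in A' by rewrite !inE bx.
    case: (key b bA') => [->|[yb ->]]; first by rewrite eqxx.
    by apply/orP; right; apply/specAP; exists y, b; rewrite yb bA'; split => //; rewrite !inE; case/setD1P: yA' => -> ->.
  - subst b; have aA' : a \in A' by rewrite !inE ax.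
    rewrite dsym; case: (key a aA') => [->|[ya ->]]; first by rewrite eqxx.
    by apply/orP; right; apply/specAP; exists y, a; rewrite ya aA'; split => //; rewrite !inE; case/setD1P: yA' => -> ->.
  - apply/orP; right; apply/specAP; exists a, b; split => //; by rewrite !inE ?ax ?bx.
have := uniq_leq_size (undup_uniq _) sub => hs.
rewrite -/(specA A) [size (_ :: _)]/= in hs.
have hA' : (#|A'| <= k)%N by rewrite -ltnS -cA.
have := IH A' hA'.
have A'pos : (0 < #|A'|)%N by move: hA1; rewrite cA.
move: hs; rewrite cA /=; lia.
Qed.

Lemma spectrum_bound : (size (spectrum d) <= #|T| - 1)%N.
Proof.
have -> : spectrum d = specA [set: T].
  rewrite /spectrum /specA; congr (undup (map _ _)); apply: eq_enum => p.
  by rewrite !inE.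
by rewrite -cardsT; apply: (specA_bound (leqnn _)).
Qed.
End SpecBound.

Lemma arith1 (a c : R) : c <= a -> a < 0 + 2 * (c / 4) -> 0 < c -> False.
Proof. move=> *; lra. Qed.

Lemma head_all (s : seq R) a : a \in s -> (forall c, c \in s -> c = a) -> head 0 s = a.
Proof. by case: s => [//|c s] _ H; apply: H; rewrite inE eqxx. Qed.

Lemma open_core (T : finType) (d : T -> T -> R) (n : nat) :
  in_frakU d -> #|T| = n ->
  exists2 eps : R, 0 < eps & forall (T' : finType) (d' : T' -> T' -> R),
    is_ultrametric d' -> (#|T'| <= n)%N -> GH_lt d d' eps ->
    in_frakU d' /\ #|T'| = n.
Proof.
move=> [ud hsz] hT.
have [[d0 [dE [dsym dtr]]] dult] := ud.
set L := 0 :: spectrum d.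
set g := minl (fun p : R * R => p.1 != p.2) (fun p => `|p.1 - p.2|) (allpairs pair L L).
have g0 : 0 < g.
  by apply: minl_gt0 => p _ hp; rewrite normr_gt0 subr_eq0.
have gap : forall a b, a \in L -> b \in L -> a != b -> g <= `|a - b|.
  move=> a b aL bL ab.
  have := @minl_le _ (fun p : R * R => p.1 != p.2) (fun p => `|p.1 - p.2|) (allpairs pair L L) (a, b).
  by apply => //; apply: allpairs_f.
have dpos : forall x x', x != x' -> g <= d x x'.
  move=> x x' xx.
  have hs : d x x' \in L by rewrite inE; apply/orP; right; apply/spectrumP; exists x, x'.
  have := gap _ _ hs (mem_head _ _).
  rewrite subr0 ger0_norm //; apply.
  by apply/eqP => /dE /eqP; rewrite (negbTE xx).
exists (g / 4); first by rewrite divr_gt0.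
move=> T' d' ud' hT' [Z [dZ [f [g' [[Z0 [ZE [Zsym Ztr]]] hf hg cov1 cov2]]]]].
set eps := g / 4.
pose phi (x : T) : T' := proj1_sig (constructive_indefinite_description _ (cov1 x)).
have hphi : forall x, dZ (f x) (g' (phi x)) < eps.
  by move=> x; rewrite /phi; case: constructive_indefinite_description.
have close : forall x x', d' (phi x) (phi x') < d x x' + 2 * eps /\
                          d x x' < d' (phi x) (phi x') + 2 * eps.
  move=> x x'; rewrite -hf -hg; split.
    have h1 := Ztr (g' (phi x)) (f x) (g' (phi x')).
    have h2 := Ztr (f x) (f x') (g' (phi x')).
    have h3 := hphi x; have h4 := hphi x'.
    rewrite Zsym in h3.
    lra.
  have h1 := Ztr (f x) (g' (phi x)) (f x').
  have h2 := Ztr (g' (phi x)) (g' (phi x')) (f x').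
  have h3 := hphi x; have h4 := hphi x'.
  rewrite (Zsym (g' (phi x')) _) in h2.
  lra.
have inj : injective phi.
  move=> x x' e; apply/eqP; apply: contraT => xx.
  have := dpos _ _ xx; have [_ h] := close x x'.
  rewrite e in h.
  have [[d0' [dE' _]] _] := ud'.
  have e0 : d' (phi x') (phi x') = 0 by apply/dE'.
  rewrite e0 in h.
  move=> hd; exfalso; move: hd h g0; rewrite /eps; apply: arith1.
have cT : #|T'| = n by apply/eqP; rewrite eqn_leq hT' -hT (leq_card _ inj).
split => //; split => //.
apply/eqP; rewrite eqn_leq (spectrum_bound ud') /= cT -hT -hsz.
pose rho (b : R) := head 0 [seq a <- spectrum d | `|a - b| < g / 2].
have sub : {subset spectrum d <= map rho (spectrum d')}.
  move=> a /spectrumP [x [x' [xx ->]]].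
  apply/mapP; exists (d' (phi x) (phi x')).
    apply/spectrumP; exists (phi x), (phi x'); split => //.
    by apply: contra xx => /eqP /inj ->.
  have [c1 c2] := close x x'.
  have ha : `|d x x' - d' (phi x) (phi x')| < g / 2.
    rewrite ltr_norml; apply/andP; split; rewrite /eps in c1 c2; lra.
  symmetry; apply: head_all.
    rewrite mem_filter ha; apply/spectrumP; exists x, x'; split => //.
  move=> c; rewrite mem_filter => /andP[hc cs].
  apply/eqP; apply: contraT => ca.
  have := gap c (d x x'); rewrite !inE cs orbT.
  have -> : (d x x' == 0) || (d x x' \in spectrum d) by apply/orP; right; apply/spectrumP; exists x, x'.
  move=> /(_ isT isT ca) hgap.
  have := ler_distD (d' (phi x) (phi x')) c (d x x').
  rewrite (distrC (d' _ _)).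
  lra.
by have := uniq_leq_size (spectrum_uniq d) sub; rewrite size_map.
Qed.


Lemma eq_maxl (I : Type) (P P' : I -> bool) (F : I -> R) (r : seq I) :
  P =1 P' -> maxl P F r = maxl P' F r.
Proof. by move=> e; elim: r => [|k r IH] //=; rewrite e IH. Qed.

Section Tree.
Variables (n : nat) (p : nat -> nat).
Hypothesis hp0 : p 0 = 0%N.
Hypothesis hpl : forall k, (0 < k)%N -> (p k < k)%N.

Lemma p_le x : (p x <= x)%N.
Proof. by case: x => [|x]; [rewrite hp0|apply: ltnW; apply: hpl]. Qed.

Lemma iter_le t i : (iter t p i <= i)%N.
Proof. elim: t => [//|t IH] /=; exact: leq_trans (p_le _) IH. Qed.

Lemma iter_lt t i : iter t p i != 0%N -> (iter t p i + t <= i)%N.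
Proof.
elim: t => [|t IH] /=; first by rewrite addn0.
move=> h.
have h0 : iter t p i != 0%N by apply: contra h => /eqP ->; rewrite hp0.
have := @hpl (iter t p i); rewrite lt0n h0 => /(_ isT) hl.
have := IH h0; lia.
Qed.

Definition anc (k i : nat) : bool := has (fun t => iter t p i == k) (iota 0 i.+1).

Lemma anc_le k i : anc k i -> (k <= i)%N.
Proof. by case/hasP => t _ /eqP <-; apply: iter_le. Qed.

Lemma anc_refl i : anc i i.
Proof. by apply/hasP; exists 0%N; rewrite ?mem_iota //=. Qed.

Lemma anc_S k j : (0 < j)%N -> k != 0%N -> anc k j = (k == j) || anc k (p j).
Proof.
move=> j0 k0; apply/idP/idP.
  case/hasP => [[|s]] _ /eqP e; first by rewrite -e /= eqxx.
  rewrite iterSr in e.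
  apply/orP; right; apply/hasP; exists s; last by rewrite e.
  rewrite mem_iota /= add0n ltnS.
  have := @iter_lt s (p j); rewrite e k0 => /(_ isT); lia.
case/orP => [/eqP ->|]; first exact: anc_refl.
case/hasP => s; rewrite mem_iota add0n /= => hs /eqP e.
apply/hasP; exists s.+1; last by rewrite iterSr e.
rewrite mem_iota add0n /=; have := hpl j0; lia.
Qed.

Definition Pr i j k : bool := (k != 0%N) && (anc k i != anc k j).
Definition Tw (w : nat -> R) i j := maxl (Pr i j) w (iota 0 n).

Lemma Tw_sym w i j : Tw w i j = Tw w j i.
Proof. by rewrite /Tw; apply: eq_maxl => k; rewrite /Pr (eq_sym (anc k i)). Qed.

Lemma Tw_ge0 w i j : 0 <= Tw w i j.
Proof. exact: maxl_ge0. Qed.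

Lemma Tw_ii w i : Tw w i i = 0.
Proof.
apply/eqP; rewrite eq_le Tw_ge0 andbT; apply: maxl_ub => // k _.
by rewrite /Pr eqxx andbF.
Qed.

Lemma Tw_ultra w i j l : Tw w i l <= Num.max (Tw w i j) (Tw w j l).
Proof.
apply: maxl_ub; first by rewrite le_max Tw_ge0.
move=> k kr /andP[k0 hk]; rewrite le_max.
case: (eqVneq (anc k i) (anc k j)) => e.
  by apply/orP; right; apply: maxl_ge => //; rewrite /Pr k0 -e.
by apply/orP; left; apply: maxl_ge => //; rewrite /Pr k0 e.
Qed.

Lemma Pr_top i j : (i < j)%N -> Pr j i j.
Proof.
move=> ij; rewrite /Pr anc_refl -lt0n (leq_ltn_trans (leq0n i) ij) /=.
by apply/negP => /anc_le; rewrite leqNgt ij.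
Qed.

Lemma Tw_dec w i j : (forall k, 0 <= w k) -> (i < j)%N -> (j < n)%N ->
  Tw w j i = Num.max (w j) (Tw w (p j) i).
Proof.
move=> w0 ij jn.
have j0 : (0 < j)%N by apply: leq_ltn_trans (leq0n i) ij.
have jr : j \in iota 0 n by rewrite mem_iota.
apply/eqP; rewrite eq_le; apply/andP; split.
  apply: maxl_ub; first by rewrite le_max w0.
  move=> k kr /andP[k0 hk]; rewrite le_max.
  case: (eqVneq k j) => [->|kj]; first by rewrite lexx.
  apply/orP; right; apply: maxl_ge => //.
  by move: hk; rewrite /Pr k0 (anc_S j0 k0) (negbTE kj).
rewrite ge_max; apply/andP; split; first exact: maxl_ge (Pr_top ij).
apply: maxl_ub; first exact: Tw_ge0.
move=> k kr /andP[k0 hk]; apply: maxl_ge => //.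
case: (eqVneq k j) => [ekj|kj].
  subst k; exfalso.
  have a1 : anc j (p j) = false by apply/negP => /anc_le; rewrite leqNgt hpl.
  have a2 : anc j i = false by apply/negP => /anc_le; rewrite leqNgt ij.
  by rewrite a1 a2 in hk.
by rewrite /Pr k0 (anc_S j0 k0) (negbTE kj).
Qed.

Lemma Tw_parent w k : (forall k, 0 <= w k) -> (0 < k)%N -> (k < n)%N ->
  Tw w k (p k) = w k.
Proof.
move=> w0 k0 kn; rewrite (Tw_dec w0 (hpl k0) kn) Tw_ii.
by apply/eqP; rewrite eq_le ge_max w0 lexx le_max lexx.
Qed.

Lemma Tw_mono (w w' : nat -> R) (c : R) i j : 0 <= c ->
  (forall k, (k < n)%N -> 0 <= w k /\ w k <= w' k /\ w' k <= w k + c) ->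
  Tw w i j <= Tw w' i j /\ Tw w' i j <= Tw w i j + c.
Proof.
move=> c0 hw; split.
  apply: maxl_ub; first exact: Tw_ge0.
  move=> k kr hk; have kr' := kr; rewrite mem_iota add0n in kr.
  have [_ [h _]] := hw k kr.
  exact: le_trans h (@maxl_ge _ (Pr i j) w' (iota 0 n) k kr' hk).
apply: maxl_ub; first by have := Tw_ge0 w i j; lra.
move=> k kr hk; have kr' := kr; rewrite mem_iota add0n in kr.
have [_ [_ h]] := hw k kr.
have := @maxl_ge _ (Pr i j) w (iota 0 n) k kr' hk.
rewrite -/(Tw w i j); lra.
Qed.

Lemma Tw_pos w i j : (forall k, (0 < k)%N -> (k < n)%N -> 0 < w k) ->
  (i < n)%N -> (j < n)%N -> i != j -> 0 < Tw w i j.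
Proof.
move=> wp iN jN ij.
wlog lt : i j iN jN ij / (i < j)%N.
  move=> H; case: (ltngtP i j) => h; first exact: H.
    by rewrite Tw_sym; apply: H; rewrite // eq_sym.
  by rewrite h eqxx in ij.
rewrite Tw_sym.
have jr : j \in iota 0 n by rewrite mem_iota.
apply: lt_le_trans (@maxl_ge _ (Pr j i) w (iota 0 n) j jr (Pr_top lt)).
by apply: wp => //; apply: leq_ltn_trans (leq0n i) lt.
Qed.

Lemma Tw_val w i j : 0 < Tw w i j -> exists k, [/\ (0 < k)%N, (k < n)%N & Tw w i j = w k].
Proof.
move=> h; case: (maxl_cases (Pr i j) w (iota 0 n)) => [e|[k [kr /andP[k0 _] e]]].
  by rewrite /Tw e ltxx in h.
by exists k; move: kr; rewrite mem_iota add0n lt0n k0 => /= kr.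
Qed.

Variable D : nat -> nat -> R.
Hypothesis D0 : forall i j, 0 <= D i j.
Hypothesis Dii : forall i, D i i = 0.
Hypothesis Dsym : forall i j, D i j = D j i.
Hypothesis Dult : forall i j l, D i l <= Num.max (D i j) (D j l).
Hypothesis Dmin : forall k j, (0 < k)%N -> (j < k)%N -> D k (p k) <= D k j.

Lemma D_nn k i : (0 < k)%N -> (i < k)%N -> D k i = Num.max (D k (p k)) (D (p k) i).
Proof.
move=> k0 ik; apply/eqP; rewrite eq_le Dult ge_max Dmin //=.
apply: le_trans (Dult (p k) k i) _.
by rewrite ge_max (Dsym (p k)) Dmin ?hpl // lexx.
Qed.

Lemma Tw_D m i j : (j <= m)%N -> (i <= j)%N -> (j < n)%N ->
  Tw (fun k => D k (p k)) j i = D j i.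
Proof.
elim: m i j => [|m IH] i j jm ij jn.
  have j0 : j = 0%N by lia.
  have i0 : i = 0%N by lia.
  by subst; rewrite Tw_ii Dii.
case: (eqVneq i j) => [->|neq]; first by rewrite Tw_ii Dii.
have lt : (i < j)%N by rewrite ltn_neqAle neq.
have j0 : (0 < j)%N by apply: leq_ltn_trans (leq0n i) lt.
rewrite (Tw_dec (fun k => D0 k (p k)) lt jn).
rewrite (D_nn j0 lt).
suff -> : Tw (fun k => D k (p k)) (p j) i = D (p j) i by [].
have pj := hpl j0.
case: (leqP i (p j)) => h.
  apply: IH => //; lia.
rewrite Tw_sym Dsym; apply: IH; lia.
Qed.

End Tree.


Lemma avoid (s : seq R) (dl : R) : 0 < dl -> exists x, [/\ 0 < x, x <= dl & x \notin s].
Proof.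
move=> dl0.
set L := [seq dl / (t%:R + 1) | t <- iota 0 (size s).+1].
case: (boolP (all (fun x => x \in s) L)) => h.
  exfalso.
  have uL : uniq L.
    rewrite map_inj_in_uniq ?iota_uniq // => a b _ _ e.
    have dn : dl != 0 by rewrite gt_eqF.
    move: e; rewrite /= => /(mulfI dn)/invr_inj/addIr/eqP; rewrite eqr_nat => /eqP //.
  have := uniq_leq_size uL (fun x xL => (allP h) x xL).
  by rewrite size_map size_iota ltnn.
move: h; rewrite -has_predC => /hasP [x /mapP [t _ ->] xs].
exists (dl / (t%:R + 1)); split => //.
  by rewrite divr_gt0 // ltr_wpDl.
rewrite ler_pdivrMr ?ltr_wpDl //; have := ler0n R t; nra.
Qed.

Lemma arith2 (a c : R) : 0 <= a -> 0 < c -> a + c = 0 -> False.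
Proof. move=> *; lra. Qed.

Section Ar.
Variables a b e f c : R.
Lemma t1 : a <= b + e -> b <= f -> a + c <= f + (e + c). Proof. move=> *; lra. Qed.
Lemma t2 : 0 <= c -> a <= b + c -> b <= e + f -> a <= (e + c) + (f + c). Proof. move=> *; lra. Qed.
Lemma t3 : a <= e + f -> a + c <= (e + c) + f. Proof. move=> *; lra. Qed.
Lemma t4 : a <= b + e -> b <= f -> a + c <= (e + c) + f. Proof. move=> *; lra. Qed.
Lemma t5 : 0 <= c -> a <= e + f -> a <= (e + c) + (f + c). Proof. move=> *; lra. Qed.
Lemma t6 : a <= f + e -> a + c <= e + (f + c). Proof. move=> *; lra. Qed.
End Ar.

Definition dZsum (T1 T2 : Type) (d1 : T1 -> T1 -> R) (d2 : T2 -> T2 -> R)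
  (phi : T1 -> T2) (c : R) (a b : T1 + T2) : R :=
  match a, b with
  | inl i, inl j => d1 i j
  | inr y, inr y' => d2 y y'
  | inl i, inr y => d2 (phi i) y + c
  | inr y, inl i => d2 (phi i) y + c
  end.

Lemma GH_close (T1 T2 : finType) (d1 : T1 -> T1 -> R) (d2 : T2 -> T2 -> R)
  (phi : T1 -> T2) (psi : T2 -> T1) (c eps : R) :
  is_metric d1 -> is_metric d2 -> cancel psi phi -> 0 < c -> c < eps ->
  (forall i j, d2 (phi i) (phi j) <= d1 i j /\ d1 i j <= d2 (phi i) (phi j) + c) ->
  GH_lt d1 d2 eps.
Proof.
move=> [a0 [aE [asym atr]]] [b0 [bE [bsym btr]]] can c0 ceps hc.
exists (T1 + T2)%type, (dZsum d1 d2 phi c), inl, inr.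
have b00 : forall y, d2 y y = 0 by move=> y; apply/bE.
split => //; last first.
- by move=> y; exists (psi y); rewrite /= can b00 add0r.
- by move=> x; exists (phi x); rewrite /= b00 add0r.
split; [|split; [|split]].
- by case=> [i|y] [j|y'] /=; rewrite ?a0 ?b0 //; apply: addr_ge0 => //; apply: ltW.
- case=> [i|y] [j|y'] /=; split.
  + by move/aE ->.
  + by case=> ->; apply/aE.
  + by move=> h; exfalso; exact: (arith2 (b0 (phi i) y') c0 h).
  + by [].
  + by move=> h; exfalso; exact: (arith2 (b0 (phi j) y) c0 h).
  + by [].
  + by move/bE ->.
  + by case=> ->; apply/bE.
- case=> [i|y] [j|y'] /=; [exact: asym| by []| by []| exact: bsym].
- case=> [i|y] [j|y'] [k|y''] /=.
  + exact: atr.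
  + apply: t1 (btr (phi i) (phi j) y'') (proj1 (hc i j)).
  + apply: t2 (ltW c0) (proj2 (hc i k)) _.
    by rewrite (bsym (phi k) y'); apply: btr.
  + exact: t3 (btr (phi i) y' y'').
  + apply: t4 _ (proj1 (hc j k)).
    by rewrite (bsym (phi j) (phi k)); apply: btr.
  + apply: t5 (ltW c0) _.
    by rewrite (bsym (phi j) y); apply: btr.
  + apply: t6.
    by rewrite (bsym y y'); apply: btr.
  + exact: btr.
Qed.

Lemma dense_core (Y : finType) (dY : Y -> Y -> R) (n : nat) :
  is_ultrametric dY -> (0 < #|Y| <= n)%N -> forall eps : R, 0 < eps ->
  exists (T : finType) (d : T -> T -> R), in_InU n d /\ GH_lt d dY eps.
Proof.
move=> udY /andP[Y0 Yn] eps eps0.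
have [[dY0 [dYE [dYsym dYtr]]] dYult] := udY.
have n0 : (0 < n)%N by apply: leq_trans Yn.
case/card_gt0P: Y0 => y0 _.
pose phi (i : nat) : Y := nth y0 (enum Y) i.
pose D (i j : nat) : R := dY (phi i) (phi j).
have D0 : forall i j, 0 <= D i j by move=> i j; apply: dY0.
have Dii : forall i, D i i = 0 by move=> i; apply/dYE.
have Dsym : forall i j, D i j = D j i by move=> i j; apply: dYsym.
have Dult : forall i j l, D i l <= Num.max (D i j) (D j l) by move=> i j l; apply: dYult.
have hpar : forall k, exists pk, (k = 0%N -> pk = 0%N) /\
    ((0 < k)%N -> (pk < k)%N /\ forall j, (j < k)%N -> D k pk <= D k j).
  case=> [|k]; first by exists 0%N.
  have ne : iota 0 k.+1 != [::] by [].
  have [y yi ymin] := seq_min (D k.+1) ne.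
  exists y; split => // _; rewrite mem_iota add0n in yi; split => //.
  by move=> j jk; apply: ymin; rewrite mem_iota add0n.
pose p (k : nat) : nat := proj1_sig (constructive_indefinite_description _ (hpar k)).
have hpspec : forall k, (k = 0%N -> p k = 0%N) /\
    ((0 < k)%N -> (p k < k)%N /\ forall j, (j < k)%N -> D k (p k) <= D k j).
  by move=> k; rewrite /p; case: constructive_indefinite_description.
have hp0 : p 0%N = 0%N by apply: (proj1 (hpspec 0%N)).
have hpl : forall k, (0 < k)%N -> (p k < k)%N by move=> k k0; apply: (proj1 (proj2 (hpspec k) k0)).
have Dmin : forall k j, (0 < k)%N -> (j < k)%N -> D k (p k) <= D k j.
  by move=> k j k0; apply: (proj2 (proj2 (hpspec k) k0)).
pose r (k : nat) : R := D k (p k).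
set dl := eps / 2.
have dl0 : 0 < dl by rewrite /dl divr_gt0.
pose fs := [seq (r a - r b) / (b%:R - a%:R) | a <- iota 0 n, b <- iota 0 n].
have nR0 : (0 : R) < n%:R by rewrite ltr0n.
have [dl' [dl'0 dl'le dl'fs]] := avoid fs (divr_gt0 dl0 nR0).
pose r' (k : nat) : R := r k + dl' * k%:R.
have hw : forall k, (k < n)%N -> 0 <= r k /\ r k <= r' k /\ r' k <= r k + dl.
  move=> k kn; split; first exact: D0.
  have h1 : 0 <= dl' * k%:R by apply: mulr_ge0; [apply: ltW|apply: ler0n].
  have h2 : dl' * k%:R <= dl.
    apply: le_trans (_ : dl' * n%:R <= dl).
      by apply: ler_wpM2l; [apply: ltW|rewrite ler_nat ltnW].
    by rewrite -ler_pdivlMr.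
  rewrite /r'; split; lra.
have r'0 : forall k, 0 <= r' k.
  move=> k; apply: addr_ge0; first exact: D0.
  by apply: mulr_ge0; [apply: ltW|apply: ler0n].
have r'pos : forall k, (0 < k)%N -> (k < n)%N -> 0 < r' k.
  move=> k k0 kn; apply: ltr_wpDl; first exact: D0.
  by apply: mulr_gt0 => //; rewrite ltr0n.
have r'inj : forall a b, (a < n)%N -> (b < n)%N -> r' a = r' b -> a = b.
  move=> a b an bn e; apply/eqP; apply: contraT => ab.
  have nz : (b%:R - a%:R : R) != 0 by rewrite subr_eq0 eqr_nat eq_sym.
  have e2 : r a - r b = dl' * (b%:R - a%:R) by move: e; rewrite /r'; lra.
  move/negP: dl'fs => H; exfalso; apply: H.
  have -> : dl' = (r a - r b) / (b%:R - a%:R) by rewrite e2 mulfK.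
  by apply: allpairs_f; rewrite mem_iota add0n.
have Dtree : forall i j, (i < n)%N -> (j < n)%N -> Tw n p r i j = D i j.
  move=> i j iN jN; case: (leqP i j) => ij.
    by rewrite Tw_sym Dsym; apply: (Tw_D hp0 hpl D0 Dii Dsym Dult Dmin (leqnn j) ij jN).
  by apply: (Tw_D hp0 hpl D0 Dii Dsym Dult Dmin (leqnn i) (ltnW ij) iN).
pose dX (i j : 'I_n) : R := Tw n p r' i j.
have closeX : forall i j : 'I_n, D i j <= dX i j /\ dX i j <= D i j + dl.
  move=> i j; rewrite -(Dtree i j (ltn_ord i) (ltn_ord j)); exact: (Tw_mono p i j (ltW dl0) hw).
have mX : is_metric dX.
  split; first by move=> i j; apply: Tw_ge0.
  split.
    move=> i j; split; last by move=> ->; apply: Tw_ii.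
    move=> h; apply/eqP; apply: contraT => ij.
    have := Tw_pos hp0 hpl r'pos (ltn_ord i) (ltn_ord j) ij.
    by rewrite -/(dX i j) h ltxx.
  split; first by move=> i j; apply: Tw_sym.
  move=> i j k; apply: le_trans (Tw_ultra _ _ _ _ j _) _.
  have := Tw_ge0 n p r' i j; have := Tw_ge0 n p r' j k.
  rewrite ge_max => h1 h2; apply/andP; split; rewrite -/(dX _ _) ?lerDl ?lerDr //.
have uX : is_ultrametric dX.
  by split => // i j k; apply: Tw_ultra.
have specX : size (spectrum dX) = (#|'I_n| - 1)%N.
  rewrite card_ord.
  have -> : (n - 1 = size [seq r' k | k <- iota 1 n.-1])%N by rewrite size_map size_iota subn1.
  apply: perm_size; apply: uniq_perm; first exact: spectrum_uniq.
    rewrite map_inj_in_uniq ?iota_uniq // => a b; rewrite !mem_iota => ha hb.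
    apply: r'inj; lia.
  move=> v; apply/spectrumP/mapP.
    case=> i [j [ij ->]].
    have h := Tw_pos hp0 hpl r'pos (ltn_ord i) (ltn_ord j) ij.
    have [k [k0 kn e]] := Tw_val h.
    by exists k; [rewrite mem_iota; lia | rewrite /dX e].
  case=> k; rewrite mem_iota => hk ->.
  have k0 : (0 < k)%N by lia.
  have kn : (k < n)%N by lia.
  have pkn : (p k < n)%N by have := hpl k k0; lia.
  exists (Ordinal kn), (Ordinal pkn); split.
    by rewrite -val_eqE /= neq_ltn (hpl k k0) orbT.
  by rewrite /dX /= Tw_parent.
exists ('I_n : finType), dX; split.
  exists ('I_n : finType), dX; split => //; first by rewrite card_ord.
  by exists id; split => //; exists id.
have idx : forall y : Y, (index y (enum Y) < n)%N.
  by move=> y; apply: leq_trans Yn; rewrite cardE index_mem mem_enum.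
pose psi (y : Y) : 'I_n := Ordinal (idx y).
apply: (GH_close (phi := fun i : 'I_n => phi i) (psi := psi) (c := dl)) => //.
- by move=> y; rewrite /psi /phi /= nth_index // mem_enum.
- by rewrite /dl; lra.
Qed.
End Aux.

Theorem mainTheorem17 (R : realType) (n : nat) : (0 < n)%N ->
  (* I^n_U is open in the space of isometry types of ultrametric spaces
     with 1 <= |X| <= n, for the Gromov-Hausdorff metric *)
  (forall (T : finType) (d : T -> T -> R),
      in_InU n d ->
      exists2 eps : R, 0 < eps &
        forall (T' : finType) (d' : T' -> T' -> R),
          is_ultrametric d' -> (0 < #|T'| <= n)%N ->
          GH_lt d d' eps -> in_InU n d')
  /\
  (* I^n_U is dense in that space *)
  (forall (T' : finType) (d' : T' -> T' -> R),
      is_ultrametric d' -> (0 < #|T'| <= n)%N ->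
      forall eps : R, 0 < eps ->
      exists (T : finType) (d : T -> T -> R),
        in_InU n d /\ GH_lt d d' eps).
Proof.
move=> n0; split; last first.
  by move=> T' d' ud' hn eps e0; apply: dense_core.
move=> T d [T0 [d0 [hU hc [f0 [bij hiso]]]]].
have [eps e0 H] := open_core hU hc.
exists eps => // T' d' ud' /andP[_ hn] gh.
have [hU' hc'] : in_frakU d' /\ #|T'| = n.
  apply: H => //.
  case: gh => [Z [dZ [f [g [mZ hf hg c1 c2]]]]].
  exists Z, dZ, (fun x => f (f0 x)), g; split.
  - by [].
  - by move=> x x'; rewrite hf hiso.
  - by [].
  - by move=> x; exact: (c1 (f0 x)).
  - move=> y; have [x hx] := c2 y.
    by case: bij => g0 K1 K2; exists (g0 x); rewrite K2.
exists T', d'; split => //; exists id; split; [by exists id | by []].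
Qed.
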